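(* Fix an even integer $k\ge2$ and variables $X_{i,j}$ for $i\in\{1,\ldots,k\}$, $j\in\{1,\ldots,k/2\}$. Let $$Q = R(X_{1,1},\ldots,X_{k,k/2}) \leftarrow \bigwedge_{j=1}^{k/2} R_j(X_{1,j},\ldots,X_{k,j}) \wedge \bigwedge_{i=1}^{k} T_i(X_{i,1},\ldots,X_{i,k/2}),$$ where the head contains all $k^2/2$ variables, with the functional dependencies: for each $j\in\{1,\ldots,k/2\}$, each subset $S\subseteq\{X_{1,j},\ldots,X_{k,j}\}$ with $|S|\ge k/2$, and each $i\in\{1,\ldots,k\}$, the dependency $S\to X_{i,j}$ (holding on relation $R_j$). Then $C(Q)\le 2$.
   Context: Valid coloring: a map $\mathcal{L}$ assigning to each query variable $X$ a finite set $\mathcal{L}(X)$ of colors such that for every functional dependency $Y_1,\ldots,Y_j\to Y$ among query variables, $\mathcal{L}(Y)\subseteq\bigcup_i\mathcal{L}(Y_i)$. Color number of a query with head list $u_0$ and body atoms with variable lists $u_1,\ldots,u_m$: $C(Q)=\max_{\mathcal{L}} \frac{|\bigcup_{X\in u_0}\mathcal{L}(X)|}{\max_{i\ge1}|\bigcup_{X\in u_i}\mathcal{L}(X)|}$, the maximum over valid colorings with positive denominator. *)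

(* Defs.v *)
From HB Require Import structures.
From mathcomp Require Import all_boot all_order all_algebra.
Set Implicit Arguments. Unset Strict Implicit. Unset Printing Implicit Defensive.
Import Order.TTheory GRing.Theory Num.Theory.

Definition coloring (V C : finType) := V -> {set C}.

Definition colors_of (V C : finType) (L : coloring V C) (U : {set V}) : {set C} :=
  \bigcup_(x in U) L x.

(* A functional dependency Y_1..Y_j -> Y is given as a pair (lhs set, rhs variable);
   a set of FDs is a predicate on such pairs. *)
Definition fd_set (V : finType) := {set V} -> V -> bool.

Definition valid_coloring (V C : finType) (fds : fd_set V) (L : coloring V C) : Prop :=
  forall (S : {set V}) (y : V), fds S y -> L y \subset colors_of L S.

Definition body_colors (V C : finType) (body : seq {set V}) (L : coloring V C) : nat :=
  \max_(a <- body) #|colors_of L a|.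

(* The ratio whose maximum over valid colorings is the color number C(Q). *)
Definition color_ratio (V C : finType) (head : {set V}) (body : seq {set V})
  (L : coloring V C) : rat :=
  (#|colors_of L head|%:R / (body_colors body L)%:R)%R.

(* Variables X_{i,j}, i < k, j < k/2 (0-indexed). *)
Definition qvar (k : nat) : finType := ('I_k * 'I_(k./2))%type.

Definition Q_head (k : nat) : {set qvar k} := [set: qvar k].

(* Column j: the variables of atom R_j. *)
Definition Q_col (k : nat) (j : 'I_(k./2)) : {set qvar k} := [set x | x.2 == j].
(* Row i: the variables of atom T_i. *)
Definition Q_row (k : nat) (i : 'I_k) : {set qvar k} := [set x | x.1 == i].

Definition Q_body (k : nat) : seq {set qvar k} :=
  [seq Q_col j | j <- enum 'I_(k./2)] ++ [seq Q_row i | i <- enum 'I_k].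

Definition Q_fds (k : nat) : fd_set (qvar k) :=
  fun S y => (S \subset Q_col y.2) && (k./2 <= #|S|).

Arguments Q_head k : clear implicits.
Arguments Q_body k : clear implicits.
Arguments Q_fds k : clear implicits.

(* Main.v *)
Require Import Defs.
From HB Require Import structures.
From mathcomp Require Import all_boot all_order all_algebra.
Import Order.TTheory GRing.Theory Num.Theory.

Lemma key (k : nat) (hkeven : ~~ odd k) (C : finType) (L : coloring (qvar k) C)
  (hv : valid_coloring (Q_fds k) L) (c : C) :
  c \in colors_of L [set: qvar k] ->
  k./2 <= #|[set i : 'I_k | c \in colors_of L (Q_row i)]|.
Proof.
case/bigcupP=> x _ cx.
set j := x.2.
set S := [set y : qvar k | (y.2 == j) && (c \notin L y)].
have hS : #|S| < k./2.
  rewrite ltnNge; apply/negP => hS.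
  have /hv : Q_fds k S x.
    rewrite /Q_fds hS andbT; apply/subsetP => y; rewrite !inE => /andP[/eqP -> _].
    by rewrite eqxx.
  move/subsetP/(_ c cx)/bigcupP=> [y]; rewrite inE => /andP[_ /negP]; done.
set A := [set i : 'I_k | c \in L (i, j)].
have eS : S = (fun i => (i, j)) @: ~: A.
  apply/setP => -[i j']; rewrite !inE; apply/idP/imsetP.
    move=> /andP[/eqP /= ej cn]; exists i; first by rewrite !inE -ej.
    by rewrite ej.
  by move=> [i' ]; rewrite !inE => ci [-> ->] /=; rewrite eqxx.
have cS : #|S| = #|~: A| by rewrite eS card_imset // => a b [].
have hA : #|A| + #|~: A| = k by rewrite cardsC card_ord.
have kk : k = k./2 + k./2.
  by rewrite -{1}(odd_double_half k) (negbTE hkeven) add0n addnn.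
have hA2 : k./2 <= #|A|.
  have {}hA : #|A| + #|S| = k./2 + k./2 by rewrite -kk cS.
  rewrite leqNgt; apply/negP => h.
  have := leq_add h hS; rewrite addSn addnS hA.
  by move/ltnW; rewrite ltnn.
apply: (leq_trans hA2); apply: subset_leq_card; apply/subsetP => i.
rewrite !inE => ci; apply/bigcupP; exists (i, j) => //; by rewrite inE.
Qed.

Theorem mainTheorem5 (k : nat) (hk2 : 2 <= k) (hkeven : ~~ odd k)
  (C : finType) (L : coloring (qvar k) C) :
  valid_coloring (Q_fds k) L ->
  0 < body_colors (Q_body k) L ->
  (color_ratio (Q_head k) (Q_body k) L <= 2%:R)%R.
Proof.
move=> hv hD.
set D := body_colors (Q_body k) L in hD *.
set T := colors_of L (Q_head k).
have kk : k = k./2 + k./2.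
  by rewrite -{1}(odd_double_half k) (negbTE hkeven) add0n addnn.
have hm : 0 < k./2 by move: hk2; rewrite {1}kk; case: (k./2).
have hrow : forall i : 'I_k, #|colors_of L (Q_row i)| <= D.
  move=> i; rewrite /D /body_colors.
  apply: (@leq_bigmax_seq _ _ _ (fun a => #|colors_of L a|)) => //.
  rewrite mem_cat; apply/orP; right; apply/mapP; exists i => //.
  by rewrite mem_enum.
have dc : #|T| * k./2 <= \sum_(i < k) #|colors_of L (Q_row i)|.
  have -> : \sum_(i < k) #|colors_of L (Q_row i)| =
            \sum_(c : C) #|[set i : 'I_k | c \in colors_of L (Q_row i)]|.
    transitivity (\sum_(i < k) \sum_(c : C) ((c \in colors_of L (Q_row i)) : nat)).
      apply: eq_bigr => i _; rewrite -sum1_card big_mkcond /=.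
      by apply: eq_bigr => c _; case: (_ \in _).
    rewrite exchange_big /=; apply: eq_bigr => c _.
    rewrite -sum1_card [RHS]big_mkcond /=; apply: eq_bigr => i _; rewrite inE.
    by case: (c \in _).
  rewrite -sum1_card big_distrl /= [X in _ <= X](bigID (mem T)) /=.
  apply: leq_trans (leq_addr _ _); apply: leq_sum => c cT.
  by rewrite mul1n; apply: key.
have hsum : \sum_(i < k) #|colors_of L (Q_row i)| <= k * D.
  by rewrite -[k in k * D]card_ord -sum_nat_const; apply: leq_sum => i _.
have hT : #|T| <= 2 * D.
  have : #|T| * k./2 <= (2 * D) * k./2.
    apply: leq_trans dc (leq_trans hsum _).
    by rewrite {1}kk addnn -mul2n mulnAC.
  by rewrite leq_pmul2r.
rewrite /color_ratio -/D -/T ler_pdivrMr ?ltr0n //.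
by rewrite -natrM ler_nat.
Qed.
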